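(* Let $n\ge1$ and $F:\mathbb{F}_{2^n}\to\mathbb{F}_{2^n}$ any function. Then $F$ is an o-polynomial if and only if both $$\sum_{b\in\mathbb{F}_{2^n}^*}\sum_{v\in\mathbb{F}_{2^n}} W_F^2(bv,v) = (2^n-1)2^{2n+1}$$ and $$\sum_{b\in \mathbb{F}_{2^n}^*}\ \sum_{v_1,v_2\in \mathbb{F}_{2^n}}W_F(bv_1,v_1)W_F(bv_2,v_2)W_F(b(v_1+v_2),v_1+v_2)=(2^n-1)2^{3n+2}$$ hold.
   Context: $tr_n$ denotes the absolute trace from $\mathbb{F}_{2^n}$ to $\mathbb{F}_2$, $\mathbb{F}_{2^n}^*=\mathbb{F}_{2^n}\setminus\{0\}$, and $W_F(u,v)=\sum_{x\in\mathbb{F}_{2^n}}(-1)^{tr_n(vF(x))+tr_n(ux)}$. In $PG(2,2^n)$, a hyperoval is a set of $2^n+2$ points no three of which lie on a common line. A function (polynomial) $F$ over $\mathbb{F}_{2^n}$ is an o-polynomial if $\{(1,t,F(t)) : t\in\mathbb{F}_{2^n}\}\cup\{(0,1,0),(0,0,1)\}$ is a hyperoval of $PG(2,2^n)$. Equivalently (known fact), for every $a\in\mathbb{F}_{2^n}$ and $b\in\mathbb{F}_{2^n}^*$ the equation $F(x)+bx=a$ has $0$ or $2$ solutions in $\mathbb{F}_{2^n}$. *)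

(* Defs.v *)
(* F_{2^n} is modelled as an arbitrary finite field K with #|K| = 2^n. *)
From HB Require Import structures.
From mathcomp Require Import all_boot all_order all_algebra all_field.
Set Implicit Arguments. Unset Strict Implicit. Unset Printing Implicit Defensive.
Import GRing.Theory.
Local Open Scope ring_scope.

(* absolute trace tr_n : F_{2^n} -> F_2 (values 0 or 1 in K) *)
Definition tr (K : fieldType) (n : nat) (x : K) : K := \sum_(i < n) x ^+ (2 ^ i).

Definition sgnF (K : fieldType) (a : K) : int := if a == 0 then 1 else -1.

Definition walsh (K : finFieldType) (n : nat) (F : K -> K) (u v : K) : int :=
  \sum_(x : K) sgnF (tr n (v * F x) + tr n (u * x)).

(* Homogeneous coordinates of points of PG(2,q): nonzero row vectors in K^3. *)
Definition vec3 (K : fieldType) (a b c : K) : 'rV[K]_3 :=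
  \row_(j < 3) [:: a; b; c]`_j.

Definition collinear (K : fieldType) (p q r : 'rV[K]_3) : bool :=
  (\rank (col_mx p (col_mx q r)) < 3)%N.

Definition same_point (K : fieldType) (p q : 'rV[K]_3) : bool :=
  (\rank (col_mx p q) < 2)%N.

Definition hyperoval (K : finFieldType) (S : {set 'rV[K]_3}) : Prop :=
  [/\ (forall p, p \in S -> p != 0),
      (forall p q, p \in S -> q \in S -> p != q -> ~~ same_point p q),
      #|S| = (#|K| + 2)%N &
      (forall p q r, p \in S -> q \in S -> r \in S ->
         p != q -> q != r -> p != r -> ~~ collinear p q r)].

Definition opoly_set (K : finFieldType) (F : K -> K) : {set 'rV[K]_3} :=
  [set vec3 1 t (F t) | t : K] :|: [set vec3 0 1 0; vec3 0 0 1].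

Definition is_opoly (K : finFieldType) (F : K -> K) : Prop :=
  hyperoval (opoly_set F).

(* Main.v *)
Require Import Defs.
From HB Require Import structures.
From mathcomp Require Import all_boot all_order all_algebra all_field.
From mathcomp Require Import ring lra zify.
Set Implicit Arguments. Unset Strict Implicit. Unset Printing Implicit Defensive.
Import GRing.Theory Num.Theory.
Local Open Scope ring_scope.

Lemma col3E (K : fieldType) (a1 a2 a3 b1 b2 b3 c1 c2 c3 : K) (i : 'I_(1 + (1 + 1))) (j : 'I_3) :
  col_mx (vec3 a1 a2 a3) (col_mx (vec3 b1 b2 b3) (vec3 c1 c2 c3)) i j
  = nth 0 (nth [::] [:: [:: a1; a2; a3]; [:: b1; b2; b3]; [:: c1; c2; c3]] i) j.
Proof.
rewrite mxE; case: splitP => k hk.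
  by rewrite mxE hk; case: k hk => [[]].
rewrite mxE; case: splitP => l hl; rewrite mxE hk.
  by case: l hl => [[]] //= _ ->.
by case: l hl => [[]] //= _ ->.
Qed.

Lemma det3E (K : fieldType) (a1 a2 a3 b1 b2 b3 c1 c2 c3 : K) :
  \det (col_mx (vec3 a1 a2 a3) (col_mx (vec3 b1 b2 b3) (vec3 c1 c2 c3)) : 'M_3)
  = a1 * (b2 * c3 - b3 * c2) - a2 * (b1 * c3 - b3 * c1) + a3 * (b1 * c2 - b2 * c1).
Proof.
set A := col_mx _ _.
have hA := col3E a1 a2 a3 b1 b2 b3 c1 c2 c3; rewrite -/A in hA; clearbody A.
rewrite (expand_det_row _ 0) !big_ord_recl big_ord0 /cofactor.
rewrite !(expand_det_row _ 0) !big_ord_recl !big_ord0 /cofactor.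
rewrite !det_mx11 !mxE !hA /=.
rewrite /bump /=.
ring.
Qed.

Lemma collinearE (K : fieldType) (p q r : 'rV[K]_3) :
  collinear p q r = (\det (col_mx p (col_mx q r) : 'M_3) == 0).
Proof.
rewrite /collinear.
have h : (\det (col_mx p (col_mx q r) : 'M_3) == 0) = ~~ row_free (col_mx p (col_mx q r) : 'M_3).
  by rewrite row_free_unit unitmxE unitfE negbK.
by rewrite h /row_free ltn_neqAle rank_leq_row andbT.
Qed.

Lemma same_col (K : fieldType) (p q r : 'rV[K]_3) :
  same_point p q -> collinear p q r.
Proof.
rewrite /same_point /collinear => h.
have e1 : \rank (col_mx p (col_mx q r)) = \rank (p + q + r)%MS.
  by rewrite -addsmxE -addsmxA (adds_eqmx (eqmx_refl p) (addsmxE q r)).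
have e2 : \rank (col_mx p q) = \rank (p + q)%MS by rewrite -addsmxE.
rewrite e1; apply: leq_ltn_trans (mxrank_adds_leqif _ _).1 _.
rewrite -e2; have := rank_leq_row r; lia.
Qed.

Lemma rank3 (K : fieldType) (p q r : 'rV[K]_3) :
  \rank (col_mx p (col_mx q r)) = \rank (p + q + r)%MS.
Proof. by rewrite -addsmxE -addsmxA (adds_eqmx (eqmx_refl p) (addsmxE q r)). Qed.

Lemma col12 (K : fieldType) (p q r : 'rV[K]_3) : collinear p q r = collinear q p r.
Proof. by rewrite /collinear !rank3 (addsmxC p q). Qed.

Lemma col23 (K : fieldType) (p q r : 'rV[K]_3) : collinear p q r = collinear p r q.
Proof. by rewrite /collinear !rank3 -!addsmxA (addsmxC q r). Qed.

Lemma vec3_eq (K : fieldType) (a b c a' b' c' : K) :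
  vec3 a b c = vec3 a' b' c' -> [/\ a = a', b = b' & c = c'].
Proof.
move=> h; have e j := congr1 (fun M : 'rV[K]_3 => M 0 j) h.
move: (e 0) (e 1) (e 2); rewrite !mxE /=. done.
Qed.

Section Geo.
Variables (K : finFieldType) (F : K -> K).
Definition Ap (t : K) := vec3 1 t (F t).
Definition E2 : 'rV[K]_3 := vec3 0 1 0.
Definition E3 : 'rV[K]_3 := vec3 0 0 1.
Definition G (b x : K) := F x + b * x.
Definition Nb b z := #|[set x | G b x == G b z]|.

Lemma memS p : p \in opoly_set F -> (exists t, p = Ap t) \/ p = E2 \/ p = E3.
Proof.
rewrite !inE => /orP[/imsetP[t _ ->]|/orP[/eqP->|/eqP->]]; by [left; exists t|right;left|right;right].
Qed.
Lemma inSA t : Ap t \in opoly_set F.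
Proof. by rewrite !inE; apply/orP; left; apply/imsetP; exists t. Qed.
Lemma inSE2 : E2 \in opoly_set F.
Proof. by rewrite !inE eqxx orbT. Qed.
Lemma inSE3 : E3 \in opoly_set F.
Proof. by rewrite !inE eqxx !orbT. Qed.

Lemma Ap_inj a b : (Ap a == Ap b) = (a == b).
Proof. apply/eqP/eqP => [/vec3_eq[]//|->//]. Qed.
Lemma Ap_E2 a : (Ap a == E2) = false.
Proof. apply/eqP => /vec3_eq[] /eqP; by rewrite oner_eq0. Qed.
Lemma Ap_E3 a : (Ap a == E3) = false.
Proof. apply/eqP => /vec3_eq[] /eqP; by rewrite oner_eq0. Qed.
Lemma E2_E3 : (E2 == E3) = false.
Proof. apply/eqP => /vec3_eq[] _ /eqP; by rewrite oner_eq0. Qed.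

Lemma col_AAA a b c : collinear (Ap a) (Ap b) (Ap c) =
   ((b - a) * (F c - F a) - (c - a) * (F b - F a) == 0).
Proof. rewrite collinearE det3E; congr (_ == 0); ring. Qed.
Lemma col_AAE2 a b : collinear (Ap a) (Ap b) E2 = (F a == F b).
Proof. rewrite collinearE det3E -[F a == F b]subr_eq0; congr (_ == 0); ring. Qed.
Lemma col_AAE3 a b : collinear (Ap a) (Ap b) E3 = (a == b).
Proof. rewrite collinearE det3E [a == b]eq_sym -[b == a]subr_eq0; congr (_ == 0); ring. Qed.
Lemma col_AE2E3 a : collinear (Ap a) E2 E3 = false.
Proof. rewrite collinearE det3E; apply/negbTE; rewrite (_ : _ + _ = 1) ?oner_eq0 //; ring. Qed.

Lemma three_col c x y z : G c x = G c z -> G c y = G c z ->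
  collinear (Ap z) (Ap x) (Ap y).
Proof.
move=> hx hy; rewrite col_AAA.
have ex : F x = G c z - c * x by rewrite -hx /G; ring.
have ey : F y = G c z - c * y by rewrite -hy /G; ring.
have ez : F z = G c z - c * z by rewrite /G; ring.
by rewrite ex ey ez; apply/eqP; ring.
Qed.

Definition noncol_S := forall p q r, p \in opoly_set F -> q \in opoly_set F ->
   r \in opoly_set F -> p != q -> q != r -> p != r -> ~~ collinear p q r.

Lemma card_set_ge3 (Y : {set K}) x y w : x \in Y -> y \in Y -> w \in Y ->
  x != y -> y != w -> x != w -> (2 < #|Y|)%N.
Proof.
move=> xY yY wY xy yw xw.
have : #|[set x; y; w]| = 3%N.
  rewrite -setUA cardsU1 cards2 !inE negb_or xy xw yw /=. done.
move=> <-; apply: subset_leq_card; apply/subsetP => u; rewrite !inE.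
by case/orP => [/orP[]|] /eqP ->.
Qed.

Lemma pick_other (Y : {set K}) z : z \in Y -> (1 < #|Y|)%N -> exists y, (y \in Y) && (y != z).
Proof.
move=> zY; rewrite (cardsD1 z Y) zY add1n ltnS => /card_gt0P[y]; rewrite !inE => /andP[yz yY].
by exists y; rewrite yY yz.
Qed.

Lemma fwd : noncol_S -> forall b z, b != 0 -> Nb b z = 2%N.
Proof.
move=> H b z bnz.
have Finj x y : F x = F y -> x = y.
  move=> e; case: (eqVneq x y) => // nxy; exfalso.
  have := H _ _ _ (inSA x) (inSA y) inSE2; rewrite Ap_inj !Ap_E2 col_AAE2 e eqxx nxy.
  by move=> /(_ isT isT isT).
have noTriple c x y : x != z -> y != z -> x != y -> G c x = G c z -> G c y = G c z -> False.
  move=> xz yz xy hx hy.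
  have := H _ _ _ (inSA z) (inSA x) (inSA y); rewrite !Ap_inj (three_col hx hy).
  by rewrite eq_sym xz xy eq_sym yz => /(_ isT isT isT).
pose s x := (F x - F z) / (z - x).
have gs x : x != z -> G (s x) x = G (s x) z.
  move=> xz; rewrite /G /s; field; by rewrite subr_eq0 eq_sym.
pose T := [set x | x != z].
have sT : {in T &, injective s}.
  move=> x y; rewrite !inE => xz yz e; case: (eqVneq x y) => // nxy; exfalso.
  apply: (noTriple (s x) x y xz yz nxy (gs x xz)); rewrite e; exact: gs.
have sNZ x : x \in T -> s x != 0.
  rewrite inE => xz; rewrite /s mulf_eq0 invr_eq0 !subr_eq0 negb_or [z == x]eq_sym xz andbT.
  by apply/eqP => /Finj /eqP; rewrite (negbTE xz).
have im : s @: T = [set c | c != 0].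
  apply/eqP; rewrite eqEcard; apply/andP; split.
    by apply/subsetP => c /imsetP[x xT ->]; rewrite inE; exact: sNZ.
  rewrite card_in_imset //. rewrite !cardsE !cardC1. done.
have : b \in s @: T by rewrite im inE.
case/imsetP => y; rewrite inE => yz eb.
have Gy : G b y = G b z by rewrite eb; apply: gs.
have zY : z \in [set x | G b x == G b z] by rewrite inE.
have yY : y \in [set x | G b x == G b z] by rewrite inE Gy.
apply/eqP; rewrite /Nb eqn_leq; apply/andP; split.
  rewrite leqNgt; apply/negP => h3.
  have : (1 < #|[set x | G b x == G b z] :\ z|)%N.
    by move: h3; rewrite (cardsD1 z) zY.
  have yY' : y \in [set x | G b x == G b z] :\ z by rewrite !inE yz Gy eqxx.
  case/(pick_other yY') => w; rewrite !inE => /andP[/andP[wz /eqP Gw] wy].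
  by apply: (noTriple b y w yz wz _ Gy Gw); rewrite eq_sym.
have : #|[set z; y]| = 2%N by rewrite cards2 eq_sym yz.
move=> <-; apply: subset_leq_card; apply/subsetP => u; rewrite !inE.
by case/orP => /eqP ->; rewrite ?Gy eqxx.
Qed.

Section Bwd.
Hypothesis hN : forall b z, b != 0 -> Nb b z = 2%N.

Lemma slope_eq c x a : G c x = G c a -> x != a -> (F x - F a) / (a - x) = c.
Proof.
move=> e xa; have e' : F x - F a = c * (a - x) by move: e; rewrite /G => e; rewrite -[F x](addrK (c * x)) e; ring.
by rewrite e' mulfK // subr_eq0 eq_sym.
Qed.

Lemma Finj x y : F x = F y -> x = y.
Proof.
move=> e; case: (eqVneq y x) => // nyx; exfalso.
pose s u := (F u - F x) / (x - u).
pose T := [set u | u != x].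
pose T' := [set u in T | s u != 0].
have sub : [set c : K | c != 0] \subset s @: T'.
  apply/subsetP => c; rewrite inE => cnz.
  have xY : x \in [set u | G c u == G c x] by rewrite inE.
  have h2 : (1 < #|[set u | G c u == G c x]|)%N by move: (hN x cnz); rewrite /Nb => ->.
  have [u /andP[]] := pick_other xY h2; rewrite inE => /eqP Gu ux.
  have su : s u = c := slope_eq Gu ux.
  apply/imsetP; exists u; last by rewrite su.
  by rewrite !inE ux /= su cnz.
have : (#|T| <= #|T'|)%N.
  apply: leq_trans (leq_imset_card s T'); apply: leq_trans (subset_leq_card sub).
  by rewrite !cardsE !cardC1.
have sTT : T' \subset T by apply/subsetP => u; rewrite inE => /andP[].
move=> le; have : T' == T by rewrite eqEcard sTT le.
move/eqP => eT; have : y \in T' by rewrite eT inE.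
by rewrite !inE /s e subrr mul0r eqxx andbF.
Qed.

Lemma noAAA a b c : a != b -> b != c -> a != c -> ~~ collinear (Ap a) (Ap b) (Ap c).
Proof.
move=> ab bc ac; rewrite col_AAA; apply/negP => hcol.
pose be := (F b - F a) / (a - b).
have eb : F b - F a = be * (a - b) by rewrite /be mulfVK // subr_eq0.
have Gb : G be b = G be a.
  apply/eqP; rewrite -subr_eq0; apply/eqP.
  by transitivity (F b - F a - be * (a - b)); [rewrite /G; ring | rewrite eb; ring].
rewrite eb in hcol.
have h0 : (b - a) * (F c - F a - be * (a - c)) = 0 by rewrite -(eqP hcol); ring.
move: h0 => /eqP; rewrite mulf_eq0 subr_eq0 eq_sym (negbTE ab) /= subr_eq0 => /eqP ec.
have Gc : G be c = G be a.
  apply/eqP; rewrite -subr_eq0; apply/eqP.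
  by transitivity (F c - F a - be * (a - c)); [rewrite /G; ring | rewrite ec; ring].
case: (eqVneq be 0) => [be0|benz].
  move: eb; rewrite be0 mul0r => /eqP; rewrite subr_eq0 => /eqP /Finj /eqP.
  by rewrite eq_sym (negbTE ab).
have := hN a benz; rewrite /Nb => h.
have := @card_set_ge3 [set u | G be u == G be a] a b c.
by rewrite !inE Gb Gc eqxx h => /(_ isT isT isT ab bc ac).
Qed.

Lemma noAAE2 a b : a != b -> ~~ collinear (Ap a) (Ap b) E2.
Proof. by move=> ab; rewrite col_AAE2; apply/negP => /eqP /Finj /eqP; rewrite (negbTE ab). Qed.
Lemma noAAE3 a b : a != b -> ~~ collinear (Ap a) (Ap b) E3.
Proof. by move=> ab; rewrite col_AAE3. Qed.
Lemma noAE2E3 a : ~~ collinear (Ap a) E2 E3.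
Proof. by rewrite col_AE2E3. Qed.

Ltac ds := first [ done | by rewrite eq_sym ].
Ltac fin := first [ by apply: noAAA; ds | by apply: noAAE2; ds | by apply: noAAE3; ds | by apply: noAE2E3 ].

Lemma noncolS : noncol_S.
Proof.
move=> p q r pS qS rS.
case: (memS pS) => [[a ->]|[->|->]]; case: (memS qS) => [[b ->]|[->|->]];
  case: (memS rS) => [[c ->]|[->|->]]; move=> pq qr pr; rewrite ?Ap_inj in pq qr pr.
all: first [ by rewrite eqxx in pq | by rewrite eqxx in qr | by rewrite eqxx in pr | fin
  | (rewrite col12; fin) | (rewrite col23; fin) | (rewrite col12 col23; fin)
  | (rewrite col23 col12; fin) | (rewrite col12 col23 col12; fin) ].
Qed.

Lemma vec3_neq0 (a b c : K) : (a != 0) || (b != 0) || (c != 0) -> vec3 a b c != 0.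
Proof.
move=> h; apply/eqP => e; have f j := congr1 (fun M : 'rV[K]_3 => M 0 j) e.
move: (f 0) (f 1) (f 2) h; rewrite !mxE /= => -> -> ->; by rewrite eqxx.
Qed.

Lemma card_S : #|opoly_set F| = (#|K| + 2)%N.
Proof.
rewrite /opoly_set; have := cardsUI [set Ap t | t : K] [set E2; E3].
have -> : [set Ap t | t : K] :&: [set E2; E3] = set0.
  apply/setP => p; rewrite !inE; apply/negbTE; apply/negP => /andP[/imsetP[t _ ->]].
  by rewrite !Ap_E2 Ap_E3.
rewrite cards0 addn0 => ->.
rewrite card_imset; last by move=> x y /eqP; rewrite Ap_inj => /eqP.
by rewrite cards2 E2_E3 cardT ?cardE.
Qed.

Lemma bwd : is_opoly F.
Proof.
split.
- move=> p /memS [[t ->]|[->|->]]; apply: vec3_neq0; by rewrite ?oner_eq0 ?orbT.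
- move=> p q pS qS pq.
  have [r [rS pr qr]] : exists r, [/\ r \in opoly_set F, p != r & q != r].
    case: (eqVneq p E2) => [pE2|pE2]; case: (eqVneq q E2) => [qE2|qE2].
    + by rewrite pE2 qE2 eqxx in pq.
    + case: (eqVneq q E3) => [qE3|qE3].
        by exists (Ap 0); rewrite inSA pE2 qE3 ![_ == Ap _]eq_sym Ap_E2 Ap_E3.
      by exists E3; rewrite inSE3 pE2 E2_E3 qE3.
    + case: (eqVneq p E3) => [pE3|pE3].
        by exists (Ap 0); rewrite inSA qE2 pE3 ![_ == Ap _]eq_sym Ap_E2 Ap_E3.
      by exists E3; rewrite inSE3 pE3 qE2 E2_E3.
    + by exists E2; split; rewrite ?inSE2.
  apply: contra (noncolS pS qS rS pq qr pr); exact: same_col.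
- exact: card_S.
- exact: noncolS.
Qed.
End Bwd.
End Geo.

Section S.
Variables (n : nat) (K : finFieldType).
Hypothesis n1 : (1 <= n)%N.
Hypothesis cK : #|K| = (2 ^ n)%N.

Lemma ch2 : 2 \in [pchar K].
Proof. by apply: (card_finPcharP cK). Qed.

Lemma add2 (x : K) : x + x = 0.
Proof. by rewrite -mulr2n -mulr_natl (pcharf0 ch2) mul0r. Qed.

Lemma frobX (x y : K) i : (x + y) ^+ (2 ^ i) = x ^+ (2 ^ i) + y ^+ (2 ^ i).
Proof. apply: exprDn_pchar. rewrite (eq_pnat _ (pcharf_eq ch2)). by rewrite pnatX pnat_id. Qed.

Lemma trD (x y : K) : tr n (x + y) = tr n x + tr n y.
Proof. by rewrite /tr -big_split /=; apply: eq_bigr => i _; rewrite frobX. Qed.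

Lemma tr0 : tr n (0 : K) = 0.
Proof. by rewrite /tr big1 // => i _; rewrite expr0n expn_eq0. Qed.

Lemma trsq (x : K) : tr n x ^+ 2 = tr n x.
Proof.
have -> : tr n x ^+ 2 = \sum_(i < n) x ^+ (2 ^ i.+1).
  rewrite /tr.
  elim: n => [|m IH]; first by rewrite !big_ord0 expr0n.
  rewrite !big_ord_recr /= -IH.
  have := frobX (\sum_(i < m) x ^+ (2 ^ i)) (x ^+ (2 ^ m)) 1; rewrite expn1 => ->.
  by rewrite -exprM expnS mulnC.
rewrite /tr; case: n n1 cK => // m _ cK'.
rewrite big_ord_recr big_ord_recl /= expn0 expr1.
rewrite -cK' expf_card addrC; congr (_ + _).

Qed.

Lemma tr01 (x : K) : tr n x = 0 \/ tr n x = 1.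
Proof.
have h := trsq x.
have : tr n x * (tr n x - 1) = 0 by rewrite mulrBr mulr1 -expr2 h subrr.
by move/eqP; rewrite mulf_eq0 subr_eq0 => /orP[] /eqP; [left|right].
Qed.

Lemma tr_nz : exists y : K, tr n y != 0.
Proof.
pose p : {poly K} := \sum_(i < n) 'X^(2 ^ i).
have hp y : p.[y] = tr n y.
  by rewrite /p horner_sum; apply: eq_bigr => i _; rewrite hornerXn.
have pn0 : p != 0.
  apply/eqP => /(congr1 (fun q : {poly K} => q`_1)).
  rewrite coef_sum coef0; case: n n1 => // m _.
  rewrite big_ord_recl /= coefXn expn0 eqxx big1 ?addr0; first by move/eqP; rewrite oner_eq0.
  move=> i _; rewrite coefXn /bump /= add1n expnS.
  case: (2 ^ i)%N (expn_gt0 2 i) => // k _; rewrite mulnS; by case: k.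
have szp : (size p <= (2 ^ n.-1).+1)%N.
  apply: leq_trans (size_sum _ _ _) _.
  apply/bigmax_leqP => i _; rewrite size_polyXn ltnS leq_exp2l //.
  by rewrite -ltnS prednK //.
have [y Hy|H] := pickP (fun y : K => tr n y != 0); first by exists y.
have hall : all (root p) (enum K).
  by apply/allP => y _; rewrite /root hp; move: (H y) => /= /negbFE.
have := @max_poly_roots K p (enum K) pn0 hall (enum_uniq K).
move=> /leq_trans /(_ szp).
rewrite -cardE cK; case: n n1 => // m _ /=.
rewrite expnS ltnS; have := expn_gt0 2 m; lia.
Qed.

Definition chi (y : K) : int := sgnF (tr n y).

Lemma chiD x y : chi (x + y) = chi x * chi y.
Proof.
rewrite /chi trD /sgnF.
case: (tr01 x) => ->; case: (tr01 y) => ->; rewrite ?addr0 ?add0r ?eqxx ?oner_eq0 //=.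
by rewrite add2 eqxx.
Qed.

Lemma chi0 : chi 0 = 1.
Proof. by rewrite /chi tr0 /sgnF eqxx. Qed.

Lemma orth (a : K) : \sum_(v : K) chi (v * a) = if a == 0 then #|K|%:Z else 0.
Proof.
have [->|anz] := eqVneq a 0.
  rewrite (eq_bigr (fun _ => 1)) => [|v _]; last by rewrite mulr0 chi0.
  by rewrite sumr_const natz.
have -> : \sum_(v : K) chi (v * a) = \sum_(w : K) chi w.
  by rewrite [RHS](reindex_inj (mulIf anz)).
have [y Hy] := tr_nz.
have : \sum_(w : K) chi w = \sum_(w : K) chi w * chi y.
  by rewrite (reindex_inj (addIr y)) /=; apply: eq_bigr => w _; rewrite chiD.
rewrite -mulr_suml /chi /sgnF (negbTE Hy) => h; lra.
Qed.

Variable F : K -> K.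
Definition Phi b v z := \sum_(x : K) chi (v * (G F b x + G F b z)).

Lemma walshE b v : walsh n F (b * v) v = \sum_(x : K) chi (v * G F b x).
Proof.
apply: eq_bigr => x _; rewrite -trD /chi /G; congr (sgnF (tr n _)); ring.
Qed.

Lemma WchiE b v z : walsh n F (b * v) v * chi (v * G F b z) = Phi b v z.
Proof.
rewrite walshE mulr_suml /Phi; apply: eq_bigr => x _.
by rewrite (mulrDr v (G F b x)) chiD.
Qed.

Lemma sumPhi b z : \sum_(v : K) Phi b v z = #|K|%:Z * (Nb F b z)%:Z.
Proof.
rewrite /Phi exchange_big /=.
under eq_bigr do rewrite orth.
rewrite -big_mkcond /= sumr_const /Nb.
have -> : #|[set x | G F b x == G F b z]| = #|[pred x | G F b x + G F b z == 0]|.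
  by apply: eq_card => x; rewrite !inE /= addr_eq0 (oppr_pchar2 ch2).
by rewrite -mulr_natr natz.
Qed.

Lemma Sum1 b : \sum_(v : K) walsh n F (b * v) v ^+ 2
   = #|K|%:Z * \sum_(z : K) (Nb F b z)%:Z.
Proof.
have h v : walsh n F (b * v) v ^+ 2 = \sum_(z : K) Phi b v z.
  rewrite expr2 {2}walshE mulr_sumr; apply: eq_bigr => z _; exact: WchiE.
under eq_bigr do rewrite h.
rewrite exchange_big mulr_sumr; apply: eq_bigr => z _; exact: sumPhi.
Qed.

Lemma Sum2 b : \sum_(v1 : K) \sum_(v2 : K)
       walsh n F (b * v1) v1 * walsh n F (b * v2) v2
       * walsh n F (b * (v1 + v2)) (v1 + v2)
   = #|K|%:Z ^+ 2 * \sum_(z : K) (Nb F b z)%:Z ^+ 2.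
Proof.
have h v1 v2 : walsh n F (b * v1) v1 * walsh n F (b * v2) v2
       * walsh n F (b * (v1 + v2)) (v1 + v2) = \sum_(z : K) Phi b v1 z * Phi b v2 z.
  rewrite (walshE b (v1 + v2)) mulr_sumr; apply: eq_bigr => z _.
  rewrite mulrDl chiD -!WchiE; ring.
under eq_bigr do under eq_bigr do rewrite h.
under eq_bigr do rewrite exchange_big /=.
rewrite exchange_big mulr_sumr; apply: eq_bigr => z _ /=.
by rewrite -big_distrlr /= sumPhi; ring.
Qed.

Lemma card_nz (c : int) : \sum_(b : K | b != 0) c = c * (#|K|%:Z - 1).
Proof.
rewrite sumr_const (cardC1 (0 : K)) -mulr_natr natz.
case: #|K| (card_finNzRing_gt1 K) => //= k _.
by rewrite -addn1 PoszD addrK.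
Qed.

Lemma count_equiv (N : K -> K -> nat) :
  (\sum_(b : K | b != 0) \sum_(z : K) (N b z)%:Z = 2 * #|K|%:Z * (#|K|%:Z - 1)
   /\ \sum_(b : K | b != 0) \sum_(z : K) (N b z)%:Z ^+ 2 = 4 * #|K|%:Z * (#|K|%:Z - 1))
  <-> (forall b z, b != 0 -> N b z = 2%N).
Proof.
have cz (c : int) : \sum_(z : K) c = c * #|K|%:Z by rewrite sumr_const -mulr_natr natz.
split.
  move=> [h1 h2].
  have h3 : \sum_(b : K | b != 0) \sum_(z : K) ((N b z)%:Z - 2) ^+ 2 = 0.
    have -> : \sum_(b : K | b != 0) \sum_(z : K) ((N b z)%:Z - 2) ^+ 2 =
       \sum_(b : K | b != 0) \sum_(z : K) (N b z)%:Z ^+ 2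
       - 4 * \sum_(b : K | b != 0) \sum_(z : K) (N b z)%:Z
       + \sum_(b : K | b != 0) \sum_(z : K) 4.
      rewrite mulr_sumr -sumrB -big_split /=; apply: eq_bigr => b _.
      rewrite mulr_sumr -sumrB -big_split /=; apply: eq_bigr => z _; ring.
    rewrite h1 h2 card_nz cz; ring.
  move=> b z bnz.
  have nn : forall b : K, b != 0 -> 0 <= \sum_(z : K) ((N b z)%:Z - 2) ^+ 2.
    by move=> b' _; apply: sumr_ge0 => z' _; apply: sqr_ge0.
  have h4 := psumr_eq0P nn h3 bnz.
  have nn2 : forall z : K, true -> 0 <= ((N b z)%:Z - 2) ^+ 2.
    by move=> z' _; apply: sqr_ge0.
  have := @psumr_eq0P _ _ _ _ nn2 h4 z isT.
  move/eqP; rewrite sqrf_eq0 subr_eq0 => /eqP h5.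
  by move: h5; rewrite -[2 in RHS]/(2%N%:Z) => -[].
move=> h; split.
  rewrite (eq_bigr (fun _ => 2 * #|K|%:Z)) ?card_nz; first ring.
  by move=> b bnz; rewrite (eq_bigr (fun _ => 2)) ?cz // => z _; rewrite h.
rewrite (eq_bigr (fun _ => 4 * #|K|%:Z)) ?card_nz; first ring.
by move=> b bnz; rewrite (eq_bigr (fun _ => 4)) ?cz // => z _; rewrite h.
Qed.
End S.

Lemma nat_rhs (q : nat) : (1 <= q)%N ->
  ((q - 1) * (q * q * 2))%N%:Z = q%:Z * (2 * q%:Z * (q%:Z - 1)).
Proof. move=> h; rewrite !PoszM subzn //; ring. Qed.

Lemma nat_rhs2 (q : nat) : (1 <= q)%N ->
  ((q - 1) * (q * q * q * 4))%N%:Z = q%:Z ^+ 2 * (4 * q%:Z * (q%:Z - 1)).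
Proof. move=> h; rewrite !PoszM subzn //; ring. Qed.

Theorem mainTheorem7 (n : nat) (K : finFieldType) (F : K -> K) :
  (1 <= n)%N -> #|K| = (2 ^ n)%N ->
  is_opoly F <->
  ((\sum_(b : K | b != 0) \sum_(v : K) (walsh n F (b * v) v) ^+ 2
      = ((2 ^ n - 1) * 2 ^ (2 * n + 1))%N%:Z)
   /\
   (\sum_(b : K | b != 0) \sum_(v1 : K) \sum_(v2 : K)
       walsh n F (b * v1) v1 * walsh n F (b * v2) v2
       * walsh n F (b * (v1 + v2)) (v1 + v2)
      = ((2 ^ n - 1) * 2 ^ (3 * n + 2))%N%:Z)).
Proof.
move=> n1 cK.
have q1 : (1 <= #|K|)%N by rewrite cK expn_gt0.
have qnz : #|K|%:Z != 0 by rewrite eqz_nat -lt0n.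
have e1 : (2 ^ (2 * n + 1) = #|K| * #|K| * 2)%N by rewrite cK -!expnD -expnSr; congr (2 ^ _)%N; lia.
have e2 : (2 ^ (3 * n + 2) = #|K| * #|K| * #|K| * 4)%N.
  by rewrite cK (_ : 4 = 2 ^ 2)%N // -!expnD; congr (2 ^ _)%N; lia.
rewrite e1 e2 -cK nat_rhs // nat_rhs2 //.
have s1 : \sum_(b : K | b != 0) \sum_(v : K) (walsh n F (b * v) v) ^+ 2
   = \sum_(b : K | b != 0) #|K|%:Z * \sum_(z : K) (Nb F b z)%:Z.
  by apply: eq_bigr => b _; exact: Sum1.
have s2 : \sum_(b : K | b != 0) \sum_(v1 : K) \sum_(v2 : K)
       walsh n F (b * v1) v1 * walsh n F (b * v2) v2
       * walsh n F (b * (v1 + v2)) (v1 + v2)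
   = \sum_(b : K | b != 0) #|K|%:Z ^+ 2 * \sum_(z : K) (Nb F b z)%:Z ^+ 2.
  by apply: eq_bigr => b _; exact: Sum2.
rewrite s1 s2.
rewrite -!mulr_sumr.
have inj2 : forall x y : int, #|K|%:Z ^+ 2 * x = #|K|%:Z ^+ 2 * y <-> x = y.
  by move=> x y; split=> [|->//]; apply: mulfI; rewrite expf_neq0.
have inj1 : forall x y : int, #|K|%:Z * x = #|K|%:Z * y <-> x = y.
  by move=> x y; split=> [|->//]; apply: mulfI.
rewrite inj1 inj2 (count_equiv (Nb F)).
split.
  by case=> _ _ _ H; exact: fwd H.
exact: bwd.
Qed.
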